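(* Let $\pi$ be the cyclic permutation of $\{1,\dots,6\}$ given by $1\mapsto2\mapsto4\mapsto5\mapsto3\mapsto6\mapsto1$. Then $\pi$ is a unimodal pattern with over-rotation pair $(2,6)$, its code is non-decreasing, $r_\pi=\rho(\pi)=\frac13$, and $\pi$ has no block structure over an over-twist pattern of over-rotation number $\frac13$; that is, $\pi$ is very badly ordered.
   Context: A cyclic pattern is a cyclic permutation of $\{1,\dots,n\}$ viewed as a cycle $P$ on the line; the $P$-linear map $f$ agrees with the cycle on $P$ and is affine in between; the pattern is unimodal if $f$ has exactly one turning point, a local maximum. Over-rotation pair: $2p$ is the number of $x\in P$ with $f(x)-x$ and $f^2(x)-f(x)$ of different signs, $q$ the period, $\rho(\pi)=p/q$. $r_\pi$ is the left endpoint of the over-rotation interval $[r_\pi,\frac12]$ of $f$ (closure of the set of over-rotation numbers of non-fixed periodic orbits of $f$). For the unique fixed point $a$ of $f$, write $x>_a y$ if $x<y<a$ or $x>y>a$; code: $L(x_0)=0$ at the leftmost point and $L(f(y))=L(y)+\rho(\pi)-\varphi(y)$ with $\varphi(y)=1$ if $y>a$ and $f(y)<a$, else $0$; non-decreasing means $x>_a y\Rightarrow L(x)\le L(y)$. A pattern $A$ forces $B$ if every continuous interval map with a cycle of pattern $A$ has one of pattern $B$; an over-twist is a forcing-minimal pattern among patterns of a given over-rotation number. A permutation $\pi$ of $\{1,\dots,n\}$ has block structure over a pattern $\pi'$ if there are pairwise disjoint segments $I_0,\dots,I_k$ ($k\ge1$) with $\pi(T_n\cap I_j)=T_n\cap I_{j+1}$,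 $\pi(T_n\cap I_k)=T_n\cap I_0$, $T_n=\{1,\dots,n\}$, and $\pi'$ is the pattern obtained by collapsing each block $T_n\cap I_j$ to a point. A pattern is very badly ordered if its over-rotation number equals the left endpoint of its forced over-rotation interval while it has no block structure over an over-twist pattern of the same over-rotation number. *)

(* Defs.v *)
From Stdlib Require Import Reals Lra Lia Arith List.
Open Scope R_scope.

Fixpoint itr {A : Type} (k : nat) (f : A -> A) (x : A) : A :=
  match k with O => x | S k' => f (itr k' f x) end.

Fixpoint nsum (k : nat) (g : nat -> nat) : nat :=
  match k with O => O | S k' => (nsum k' g + g k')%nat end.
Fixpoint rsum (k : nat) (g : nat -> R) : R :=
  match k with O => 0 | S k' => rsum k' g + g k' end.

Definition is_glb (S : R -> Prop) (m : R) : Prop :=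
  (forall r, S r -> m <= r) /\ (forall m', (forall r, S r -> m' <= r) -> m' <= m).

(** A pattern is given by its size [n] and a map on [nat] whose restriction
    to T_n = {1,..,n} is the permutation. *)
Record pattern := Pat { psize : nat ; pmap : nat -> nat }.

Definition is_cyclic_perm (P : pattern) : Prop :=
  let n := psize P in let s := pmap P in
  (1 <= n)%nat /\
  (forall i, (1 <= i <= n)%nat -> (1 <= s i <= n)%nat) /\
  (forall i, (1 <= i <= n)%nat -> exists k, (k < n)%nat /\ itr k s 1%nat = i) /\
  itr n s 1%nat = 1%nat.

Definition same_pattern (P Q : pattern) : Prop :=
  psize P = psize Q /\ forall i, (1 <= i <= psize P)%nat -> pmap P i = pmap Q i.

Definition sgn_change_nat (s : nat -> nat) (i : nat) : nat :=
  if ((Nat.ltb i (s i) && Nat.ltb (s (s i)) (s i)) ||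
      (Nat.ltb (s i) i && Nat.ltb (s i) (s (s i))))%bool then 1%nat else 0%nat.

(** number of x in P with f(x)-x, f^2(x)-f(x) of different signs (= 2p) *)
Definition sgn_count (P : pattern) : nat :=
  nsum (psize P) (fun j => sgn_change_nat (pmap P) (S j)).

Definition over_rotation_pair (P : pattern) : nat * nat :=
  (Nat.div (sgn_count P) 2, psize P).

Definition rho (P : pattern) : R :=
  INR (fst (over_rotation_pair P)) / INR (snd (over_rotation_pair P)).

Definition clamp (lo hi x : R) : R := Rmax lo (Rmin hi x).
Definition hat (i : nat) (x : R) : R := Rmax 0 (1 - Rabs (x - INR i)).

(** The P-linear map of a pattern (P = {1,...,n} ⊂ R): on [1,n] it is the
    piecewise-affine interpolation of i |-> pmap P i; outside [1,n] it is
    extended constantly (only its restriction to [1,n] is ever used). *)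
Definition plin (P : pattern) (x : R) : R :=
  let y := clamp 1 (INR (psize P)) x in
  rsum (psize P) (fun j => INR (pmap P (S j)) * hat (S j) y).

Definition strictly_monotone_on (f : R -> R) (D : R -> Prop) : Prop :=
  (forall y z, D y -> D z -> y < z -> f y < f z) \/
  (forall y z, D y -> D z -> y < z -> f y > f z).

Definition turning_point (f : R -> R) (a b x : R) : Prop :=
  a < x < b /\
  forall d, d > 0 ->
    ~ strictly_monotone_on f (fun y => a <= y <= b /\ Rabs (y - x) < d).

Definition local_max (f : R -> R) (a b x : R) : Prop :=
  exists d, d > 0 /\ forall y, a <= y <= b -> Rabs (y - x) < d -> f y <= f x.

Definition unimodal (P : pattern) : Prop :=
  let f := plin P in let b := INR (psize P) in
  exists x, turning_point f 1 b x /\ local_max f 1 b x /\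
    forall y, turning_point f 1 b y -> y = x.

Definition min_period (f : R -> R) (x : R) (q : nat) : Prop :=
  (1 <= q)%nat /\ itr q f x = x /\ forall k, (0 < k < q)%nat -> itr k f x <> x.

Definition sgn_change_R (f : R -> R) (y : R) : nat :=
  if Rlt_dec ((f y - y) * (f (f y) - f y)) 0 then 1%nat else 0%nat.

(** over-rotation number of the orbit of x (of period q): (2p)/(2q) *)
Definition orbit_orn (f : R -> R) (x : R) (q : nat) : R :=
  INR (nsum q (fun k => sgn_change_R f (itr k f x))) / (2 * INR q).

Definition OR_numbers (P : pattern) (r : R) : Prop :=
  exists x q, (2 <= q)%nat /\ 1 <= x <= INR (psize P) /\
    min_period (plin P) x q /\ r = orbit_orn (plin P) x q.

(** [r] is r_pi, the left endpoint of the over-rotation interval of the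
    P-linear map (closure of OR_numbers); the left endpoint of the closure
    is the infimum. *)
Definition is_r_pi (P : pattern) (r : R) : Prop := is_glb (OR_numbers P) r.

Definition phi (a : R) (s : nat -> nat) (y : nat) : R :=
  if Rlt_dec a (INR y) then (if Rlt_dec (INR (s y)) a then 1 else 0) else 0.

(** L(x): x = s^k(1) (1 is the leftmost point), L(1) = 0,
    L(s y) = L(y) + rho - phi(y). *)
Definition code (a : R) (P : pattern) (x : nat) : R :=
  let s := pmap P in
  rsum (psize P) (fun k =>
    if Nat.eqb (itr k s 1%nat) x
    then INR k * rho P - rsum k (fun j => phi a s (itr j s 1%nat))
    else 0).

Definition gt_a (a x y : R) : Prop := (x < y < a) \/ (a < y < x).

Definition code_nondecreasing (P : pattern) : Prop :=
  forall a, 1 <= a <= INR (psize P) -> plin P a = a ->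
  forall x y, (1 <= x <= psize P)%nat -> (1 <= y <= psize P)%nat ->
    gt_a a (INR x) (INR y) -> code a P x <= code a P y.

Definition has_cycle_of_pattern (g : R -> R) (a b : R) (B : pattern) : Prop :=
  let m := psize B in
  exists z : nat -> R,
    (forall i, (1 <= i <= m)%nat -> a <= z i <= b) /\
    (forall i, (1 <= i < m)%nat -> z i < z (S i)) /\
    (forall i, (1 <= i <= m)%nat -> g (z i) = z (pmap B i)).

(** A forces B: every continuous interval map g : [a,b] -> [a,b] with a cycle
    of pattern A has one of pattern B.  (Continuous self-maps of [a,b] are
    represented by continuous maps of R sending [a,b] into itself; every
    continuous map of [a,b] extends so.) *)
Definition forces (A B : pattern) : Prop :=
  forall (a b : R) (g : R -> R), a <= b -> continuity g ->
    (forall x, a <= x <= b -> a <= g x <= b) ->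
    has_cycle_of_pattern g a b A -> has_cycle_of_pattern g a b B.

Definition over_twist (B : pattern) (r : R) : Prop :=
  is_cyclic_perm B /\ rho B = r /\
  forall C, is_cyclic_perm C -> rho C = r -> forces B C -> same_pattern C B.

(** P has block structure over P': pairwise disjoint (nonempty-on-T_n)
    segments I_0..I_k = [lo j, hi j], k >= 1, with P(T_n ∩ I_j) = T_n ∩ I_{j+1}
    (indices mod k+1), and P' is the pattern of size k+1 obtained by collapsing
    each block to a point: beta j is the left-to-right rank of block j. *)
Definition block_structure (P P' : pattern) : Prop :=
  let n := psize P in let s := pmap P in
  exists k : nat, (1 <= k)%nat /\ psize P' = S k /\
  exists (lo hi : nat -> R) (beta : nat -> nat),
    let inI := fun j (i : nat) => lo j <= INR i <= hi j in
    let nxt := fun j => if Nat.eqb j k then 0%nat else S j in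
    (forall j, (j <= k)%nat -> lo j <= hi j) /\
    (forall j j', (j <= k)%nat -> (j' <= k)%nat -> j <> j' ->
        hi j < lo j' \/ hi j' < lo j) /\
    (forall j, (j <= k)%nat -> exists i, (1 <= i <= n)%nat /\ inI j i) /\
    (forall j i, (j <= k)%nat -> (1 <= i <= n)%nat -> inI j i -> inI (nxt j) (s i)) /\
    (forall j i', (j <= k)%nat -> (1 <= i' <= n)%nat -> inI (nxt j) i' ->
        exists i, (1 <= i <= n)%nat /\ inI j i /\ s i = i') /\
    (forall j, (j <= k)%nat -> (1 <= beta j <= S k)%nat) /\
    (forall j j', (j <= k)%nat -> (j' <= k)%nat -> hi j < lo j' -> (beta j < beta j')%nat) /\
    (forall j, (j <= k)%nat -> pmap P' (beta j) = beta (nxt j)).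

Definition very_badly_ordered (P : pattern) : Prop :=
  is_r_pi P (rho P) /\
  ~ (exists P', over_twist P' (rho P) /\ block_structure P P').

Definition pi6 : pattern :=
  Pat 6 (fun i => match i with
                  | 1 => 2 | 2 => 4 | 3 => 6 | 4 => 5 | 5 => 3 | 6 => 1
                  | _ => 0 end)%nat.

(* Main.v *)
Require Import Defs.
From Stdlib Require Import Reals Lra Lia Psatz.
Open Scope R_scope.

Definition F (y:R) : R :=
  if Rle_dec y 3 then 2*y
  else if Rle_dec y 4 then 9-y else 13-2*y.

Lemma hat_spec (j:nat) y :
  ((y <= INR j - 1 \/ y >= INR j + 1) /\ hat j y = 0) \/
  (INR j - 1 <= y <= INR j /\ hat j y = y - INR j + 1) \/
  (INR j <= y <= INR j + 1 /\ hat j y = INR j + 1 - y).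
Proof.
unfold hat.
destruct (Rle_dec y (INR j - 1)).
{ left; split; [lra|]. rewrite Rabs_left1 by lra. apply Rmax_left; lra. }
destruct (Rle_dec y (INR j)).
{ right; left; split; [lra|]. rewrite Rabs_left1 by lra. rewrite Rmax_right; lra. }
destruct (Rle_dec y (INR j + 1)).
{ right; right; split; [lra|]. rewrite Rabs_right by lra. rewrite Rmax_right; lra. }
left; split; [lra|]. rewrite Rabs_right by lra. apply Rmax_left; lra.
Qed.

Lemma INR6 : INR (psize pi6) = 6.
Proof. simpl. lra. Qed.

Ltac hatd j y := destruct (hat_spec j y) as [[[?|?] ->]|[[? ->]|[? ->]]]; simpl INR in *; try lra.

Lemma plin_eq y : 1 <= y <= 6 -> plin pi6 y = F y.
Proof.
intros Hy. unfold plin. rewrite INR6.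
assert (Hc: clamp 1 6 y = y).
{ unfold clamp. rewrite Rmin_right by lra. apply Rmax_right; lra. }
rewrite Hc. simpl rsum. simpl INR.
unfold F; destruct (Rle_dec y 3); [|destruct (Rle_dec y 4)];
hatd 1%nat y; hatd 2%nat y; hatd 3%nat y; hatd 4%nat y; hatd 5%nat y; hatd 6%nat y.
Qed.

Lemma F_inc z w : z < w <= 3 -> F z < F w.
Proof. intros. unfold F. destruct (Rle_dec z 3); destruct (Rle_dec w 3); lra. Qed.

Lemma F_dec z w : 3 <= z < w -> F w < F z.
Proof. intros. unfold F.
destruct (Rle_dec z 3); destruct (Rle_dec w 3); try destruct (Rle_dec z 4); try destruct (Rle_dec w 4); lra. Qed.

Lemma F_le6 y : 1 <= y <= 6 -> F y <= 6.
Proof. intros. unfold F. destruct (Rle_dec y 3); try destruct (Rle_dec y 4); lra. Qed.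

Lemma unimodal_pi6 : unimodal pi6.
Proof.
unfold unimodal. cbv zeta. rewrite INR6.
exists 3. split; [|split].
- split; [lra|]. intros d Hd Hm.
  set (e := Rmin (d/2) 1).
  assert (He1 : 0 < e) by (unfold e; apply Rmin_glb_lt; lra).
  assert (He2 : e <= 1) by apply Rmin_r.
  assert (He3 : e <= d/2) by apply Rmin_l.
  unfold strictly_monotone_on in Hm.
  destruct Hm as [Hm|Hm].
  + assert (H := Hm 3 (3+e)).
    rewrite !plin_eq in H by lra.
    assert (F 3 < F (3+e)).
    { apply H; try split; try lra; try (rewrite Rabs_right; lra); (rewrite Rabs_left1; lra). }
    pose proof (F_dec 3 (3+e)). lra.
  + assert (H := Hm (3-e) 3).
    assert (plin pi6 (3-e) > plin pi6 3).
    { apply H; try split; try lra; try (rewrite Rabs_right; lra); try (rewrite Rabs_left1; lra). }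
    rewrite !plin_eq in H0 by lra.
    pose proof (F_inc (3-e) 3). lra.
- exists 1. split; [lra|]. intros y Hy _. rewrite !plin_eq by lra.
  pose proof (F_le6 y Hy). unfold F at 2. destruct (Rle_dec 3 3); lra.
- intros y [Hy Hn].
  destruct (Rtotal_order y 3) as [Hlt|[Heq|Hgt]]; [|exact Heq|].
  + exfalso. apply (Hn (3-y)); [lra|]. left. intros z w [Hz1 Hz2] [Hw1 Hw2] Hzw.
    rewrite !plin_eq by lra.
    apply Rabs_def2 in Hz2. apply Rabs_def2 in Hw2. apply F_inc; lra.
  + exfalso. apply (Hn (y-3)); [lra|]. right. intros z w [Hz1 Hz2] [Hw1 Hw2] Hzw.
    rewrite !plin_eq by lra.
    apply Rabs_def2 in Hz2. apply Rabs_def2 in Hw2. apply Rlt_gt, F_dec; lra.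
Qed.


Lemma pair6 : over_rotation_pair pi6 = (2%nat, 6%nat). Proof. reflexivity. Qed.
Lemma rho6 : rho pi6 = 1/3.
Proof. unfold rho. rewrite pair6. simpl. field. Qed.

Lemma cyc6 : is_cyclic_perm pi6.
Proof.
unfold is_cyclic_perm; simpl. split; [lia|]. split; [|split].
- intros i Hi. destruct i as [|[|[|[|[|[|[|i]]]]]]]; simpl; lia.
- intros i Hi. destruct i as [|[|[|[|[|[|[|i]]]]]]]; try lia.
  + exists 0%nat; split; [lia|reflexivity].
  + exists 1%nat; split; [lia|reflexivity].
  + exists 4%nat; split; [lia|reflexivity].
  + exists 2%nat; split; [lia|reflexivity].
  + exists 3%nat; split; [lia|reflexivity].
  + exists 5%nat; split; [lia|reflexivity].
- reflexivity.
Qed.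

Lemma fix_a a : 1 <= a <= 6 -> plin pi6 a = a -> a = 13/3.
Proof. intros H1 H2. rewrite plin_eq in H2 by lra. unfold F in H2.
destruct (Rle_dec a 3); try destruct (Rle_dec a 4); lra. Qed.


Ltac codet := unfold code, phi; simpl; rewrite ?rho6; repeat destruct (Rlt_dec _ _); lra.
Lemma code1 : code (13/3) pi6 1%nat = 0. Proof. codet. Qed.
Lemma code2 : code (13/3) pi6 2%nat = 1/3. Proof. codet. Qed.
Lemma code3 : code (13/3) pi6 3%nat = 1/3. Proof. codet. Qed.
Lemma code4 : code (13/3) pi6 4%nat = 2/3. Proof. codet. Qed.
Lemma code5 : code (13/3) pi6 5%nat = 1. Proof. codet. Qed.
Lemma code6 : code (13/3) pi6 6%nat = 2/3. Proof. codet. Qed.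

Lemma code_nd : code_nondecreasing pi6.
Proof.
unfold code_nondecreasing. rewrite INR6. intros a Ha Hf. apply fix_a in Hf; auto. subst a.
intros x y Hx Hy. simpl psize in Hx, Hy.
destruct x as [|[|[|[|[|[|[|x]]]]]]]; try lia;
destruct y as [|[|[|[|[|[|[|y]]]]]]]; try lia;
rewrite ?code1, ?code2, ?code3, ?code4, ?code5, ?code6; unfold gt_a; simpl INR; intros; lra.
Qed.


Definition V (y:R) : R :=
  if Rlt_dec y 2 then 0 else if Rlt_dec y 4 then -2 else if Rlt_dec y (13/3) then -4
  else if Rle_dec y 5 then -3 else -1.

Lemma F_range y : 1 <= y <= 6 -> 1 <= F y <= 6.
Proof. intros. unfold F. destruct (Rle_dec y 3); try destruct (Rle_dec y 4); lra. Qed.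

Lemma F_side1 z : 1 <= z < 13/3 -> F z > z.
Proof. intros. unfold F. destruct (Rle_dec z 3); try destruct (Rle_dec z 4); lra. Qed.
Lemma F_side2 z : 13/3 < z <= 6 -> F z < z.
Proof. intros. unfold F. destruct (Rle_dec z 3); try destruct (Rle_dec z 4); lra. Qed.

Lemma Vstep y : 1 <= y <= 6 -> y <> 13/3 -> F y <> 13/3 ->
  (V (F y) - V y <= -2) \/
  (((y < 13/3 < F y) \/ (13/3 < y /\ F y < 13/3)) /\ V (F y) - V y <= 1).
Proof.
intros H1 H2 H3. unfold V, F in *.
destruct (Rle_dec y 3); try destruct (Rle_dec y 4);
repeat destruct (Rlt_dec _ _); repeat destruct (Rle_dec _ _);
first [left; lra | right; split; [first [left; lra | right; lra] | lra] | lra].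
Qed.

Lemma sgn_cross y : 1 <= y <= 6 ->
  ((y < 13/3 < F y) \/ (13/3 < y /\ F y < 13/3)) ->
  sgn_change_R (plin pi6) y = 1%nat.
Proof.
intros Hy Hc. pose proof (F_range y Hy).
unfold sgn_change_R. rewrite (plin_eq y Hy). rewrite (plin_eq (F y)) by lra.
destruct (Rlt_dec _ _); [reflexivity|exfalso].
destruct Hc as [Hc|Hc].
- pose proof (F_side2 (F y)). nra.
- pose proof (F_side1 (F y)). nra.
Qed.

Lemma step_ineq y : 1 <= y <= 6 -> y <> 13/3 -> plin pi6 y <> 13/3 ->
  V (plin pi6 y) - V y <= 3 * INR (sgn_change_R (plin pi6) y) - 2.
Proof.
intros H1 H2 H3. rewrite (plin_eq y H1) in *.
destruct (Vstep y H1 H2 H3) as [H|[Hc H]].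
- pose proof (pos_INR (sgn_change_R (plin pi6) y)). lra.
- rewrite (sgn_cross y H1 Hc). simpl. lra.
Qed.

Lemma itr_add {A} (f : A -> A) m n x : itr (m + n) f x = itr m f (itr n f x).
Proof. induction m; simpl; congruence. Qed.

Lemma itr_fix {A} (f : A -> A) m a : f a = a -> itr m f a = a.
Proof. intros H; induction m; simpl; congruence. Qed.

Lemma rsum_le q g h : (forall k, (k < q)%nat -> g k <= h k) -> rsum q g <= rsum q h.
Proof. induction q; simpl; intros H. lra. pose proof (H q ltac:(lia)).
 assert (rsum q g <= rsum q h) by (apply IHq; intros; apply H; lia). lra. Qed.

Lemma rsum_tel q (u : nat -> R) : rsum q (fun k => u (S k) - u k) = u q - u 0%nat.
Proof. induction q; simpl. lra. rewrite IHq. lra. Qed.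

Lemma rsum_lin q c : rsum q (fun k => 3 * INR (c k) - 2) = 3 * INR (nsum q c) - 2 * INR q.
Proof. induction q; simpl rsum; simpl nsum. simpl. lra.
 rewrite IHq, plus_INR, S_INR. lra. Qed.

Lemma orbit_in x k : 1 <= x <= 6 -> 1 <= itr k (plin pi6) x <= 6.
Proof. intros H; induction k; simpl; auto. rewrite plin_eq by auto. apply F_range; auto. Qed.

Lemma OR_lb r : OR_numbers pi6 r -> 1/3 <= r.
Proof.
intros (x & q & Hq & Hx & [Hq1 [Hqx Hmin]] & ->).
rewrite INR6 in Hx.
set (f := plin pi6) in *.
set (y := fun k => itr k f x).
assert (Hna : forall k, (k <= q)%nat -> y k <> 13/3).
{ intros k Hk Hyk. unfold y in Hyk.
  assert (itr q f x = 13/3).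
  { replace q with ((q - k) + k)%nat by lia. rewrite itr_add, Hyk.
    apply itr_fix. unfold f. rewrite plin_eq by lra. unfold F.
    destruct (Rle_dec _ _); try destruct (Rle_dec _ _); lra. }
  apply (Hmin 1%nat); [lia|]. simpl. rewrite Hqx in H. rewrite H.
  unfold f. rewrite plin_eq by lra. unfold F.
  destruct (Rle_dec _ _); try destruct (Rle_dec _ _); lra. }
assert (Hsum : rsum q (fun k => V (y (S k)) - V (y k)) <=
               rsum q (fun k => 3 * INR (sgn_change_R f (itr k f x)) - 2)).
{ apply rsum_le. intros k Hk. unfold y. simpl itr.
  apply step_ineq.
  - apply orbit_in; lra.
  - apply (Hna k); lia.
  - apply (Hna (S k)); lia. }
rewrite (rsum_tel q (fun k => V (y k))), rsum_lin in Hsum.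
unfold y in Hsum. rewrite Hqx in Hsum. simpl itr in Hsum.
unfold orbit_orn.
assert (HQ : 2 <= INR q) by (replace 2 with (INR 2) by (simpl; lra); apply le_INR; lia).
set (C := INR (nsum q (fun k => sgn_change_R f (itr k f x)))) in *.
apply (Rmult_le_reg_r (2 * INR q)); [lra|].
replace (C / (2 * INR q) * (2 * INR q)) with C by (field; lra). lra.
Qed.

Ltac fval := rewrite plin_eq by lra; unfold F; repeat destruct (Rle_dec _ _); lra.
Lemma f1 : plin pi6 1 = 2. Proof. fval. Qed.
Lemma f2 : plin pi6 2 = 4. Proof. fval. Qed.
Lemma f3 : plin pi6 3 = 6. Proof. fval. Qed.
Lemma f4 : plin pi6 4 = 5. Proof. fval. Qed.
Lemma f5 : plin pi6 5 = 3. Proof. fval. Qed.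
Lemma f6 : plin pi6 6 = 1. Proof. fval. Qed.

Ltac sgnv := unfold sgn_change_R; rewrite ?f1, ?f2, ?f3, ?f4, ?f5, ?f6; destruct (Rlt_dec _ _); [reflexivity|exfalso; nra].

Lemma s1 : sgn_change_R (plin pi6) 1 = 0%nat.
Proof. unfold sgn_change_R. rewrite f1, f2. destruct (Rlt_dec _ _). exfalso; nra. reflexivity. Qed.
Lemma s2 : sgn_change_R (plin pi6) 2 = 0%nat.
Proof. unfold sgn_change_R. rewrite f2, f4. destruct (Rlt_dec _ _). exfalso; nra. reflexivity. Qed.
Lemma s3 : sgn_change_R (plin pi6) 3 = 1%nat.
Proof. unfold sgn_change_R. rewrite f3, f6. destruct (Rlt_dec _ _). reflexivity. exfalso; nra. Qed.
Lemma s4 : sgn_change_R (plin pi6) 4 = 1%nat.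
Proof. unfold sgn_change_R. rewrite f4, f5. destruct (Rlt_dec _ _). reflexivity. exfalso; nra. Qed.
Lemma s5 : sgn_change_R (plin pi6) 5 = 1%nat.
Proof. unfold sgn_change_R. rewrite f5, f3. destruct (Rlt_dec _ _). reflexivity. exfalso; nra. Qed.
Lemma s6 : sgn_change_R (plin pi6) 6 = 1%nat.
Proof. unfold sgn_change_R. rewrite f6, f1. destruct (Rlt_dec _ _). reflexivity. exfalso; nra. Qed.

Lemma OR_third : OR_numbers pi6 (1/3).
Proof.
exists 1, 6%nat. rewrite INR6. split; [lia|]. split; [lra|]. split.
- split; [lia|]. split.
  + cbn [itr]. rewrite f1, f2, f4, f5, f3, f6. reflexivity.
  + intros k Hk. destruct k as [|[|[|[|[|[|k]]]]]]; try lia; cbn [itr];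
    rewrite ?f1, ?f2, ?f4, ?f5, ?f3, ?f6; lra.
- unfold orbit_orn. cbn [nsum itr]. rewrite ?f1, ?f2, ?f4, ?f5, ?f3, ?f6.
  rewrite s1, s2, s3, s4, s5, s6. simpl. field.
Qed.

Lemma rpi6 : is_r_pi pi6 (1/3).
Proof. split. - apply OR_lb. - intros m H. apply H, OR_third. Qed.


Definition C3 : pattern := Pat 3 (fun i => match i with 1 => 2 | 2 => 3 | 3 => 1 | _ => 0 end)%nat.

Lemma clamp_cases lo hi x : lo <= hi ->
  (x <= lo /\ clamp lo hi x = lo) \/ (lo <= x <= hi /\ clamp lo hi x = x) \/
  (hi <= x /\ clamp lo hi x = hi).
Proof.
intros H. unfold clamp, Rmax, Rmin.
destruct (Rle_dec hi x); destruct (Rle_dec lo x); destruct (Rle_dec lo hi); destruct (Rle_dec x hi);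
try lra; auto.
Qed.

Lemma clamp_bd lo hi x : lo <= hi -> lo <= clamp lo hi x <= hi.
Proof. intros H. destruct (clamp_cases lo hi x H) as [[_ ->]|[[? ->]|[_ ->]]]; lra. Qed.

Lemma clamp_cont lo hi : lo <= hi -> continuity (clamp lo hi).
Proof.
intros H x. unfold continuity_pt, continue_in, limit1_in, limit_in.
intros eps Heps. exists eps. split; auto. intros y [_ Hy]. simpl in *. unfold R_dist in *.
apply Rle_lt_trans with (Rabs (y - x)); auto.
destruct (clamp_cases lo hi x H) as [[? ->]|[[? ->]|[? ->]]];
destruct (clamp_cases lo hi y H) as [[? ->]|[[? ->]|[? ->]]];
unfold Rabs; repeat destruct (Rcase_abs _); lra.
Qed.

Lemma cont_comp' (f h : R -> R) : continuity f -> continuity h -> continuity (fun x => h (f x)).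
Proof. intros. exact (continuity_comp f h H H0). Qed.

Lemma C3_cyc : is_cyclic_perm C3.
Proof.
unfold is_cyclic_perm; simpl. split; [lia|]. split; [|split].
- intros i Hi. destruct i as [|[|[|[|i]]]]; simpl; lia.
- intros i Hi. destruct i as [|[|[|[|i]]]]; try lia.
  + exists 0%nat; split; [lia|reflexivity].
  + exists 1%nat; split; [lia|reflexivity].
  + exists 2%nat; split; [lia|reflexivity].
- reflexivity.
Qed.

Lemma C3_rho : rho C3 = 1/3.
Proof. unfold rho. replace (over_rotation_pair C3) with (1%nat, 3%nat) by reflexivity. simpl. field. Qed.

Lemma force_C3 (P' : pattern) :
  psize P' = 6%nat ->
  (pmap P' 1 = 2 /\ pmap P' 2 = 4 /\ pmap P' 3 = 6 /\ pmap P' 4 = 5 /\ pmap P' 5 = 3 /\ pmap P' 6 = 1)%nat ->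
  forces P' C3.
Proof.
intros Hs (M1 & M2 & M3 & M4 & M5 & M6) a b g Hab Hg Hinv [z [Hz [Hinc Himg]]].
rewrite Hs in Hz, Hinc, Himg.
pose proof (Hz 1%nat ltac:(lia)). pose proof (Hz 6%nat ltac:(lia)).
pose proof (Hinc 1%nat ltac:(lia)). pose proof (Hinc 2%nat ltac:(lia)).
pose proof (Hinc 3%nat ltac:(lia)). pose proof (Hinc 4%nat ltac:(lia)).
pose proof (Hinc 5%nat ltac:(lia)).
assert (G1 := Himg 1%nat ltac:(lia)). rewrite M1 in G1.
assert (G2 := Himg 2%nat ltac:(lia)). rewrite M2 in G2.
assert (G3 := Himg 3%nat ltac:(lia)). rewrite M3 in G3.
assert (G4 := Himg 4%nat ltac:(lia)). rewrite M4 in G4.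
assert (G5 := Himg 5%nat ltac:(lia)). rewrite M5 in G5.
assert (G6 := Himg 6%nat ltac:(lia)). rewrite M6 in G6.
set (z1 := z 1%nat) in *. set (z2 := z 2%nat) in *. set (z3 := z 3%nat) in *.
set (z4 := z 4%nat) in *. set (z5 := z 5%nat) in *. set (z6 := z 6%nat) in *.
simpl in *.
set (Phi := fun x => clamp z5 z6 (g (clamp z2 z3 (g (clamp z1 z2 (g x)))))).
assert (HPc : continuity Phi).
{ unfold Phi. apply (cont_comp' (fun x => g (clamp z2 z3 (g (clamp z1 z2 (g x)))))); [|apply clamp_cont; lra].
  apply (cont_comp' (fun x => clamp z2 z3 (g (clamp z1 z2 (g x))))); auto.
  apply (cont_comp' (fun x => g (clamp z1 z2 (g x)))); [|apply clamp_cont; lra].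
  apply (cont_comp' (fun x => clamp z1 z2 (g x))); auto.
  apply (cont_comp' g); auto. apply clamp_cont; lra. }
assert (Hh : continuity (fun x => Phi x - x)).
{ apply continuity_minus; auto. apply derivable_continuous, derivable_id. }
destruct (IVT_cor (fun x => Phi x - x) z5 z6 Hh ltac:(lra)) as [p [Hp Hp0]].
{ pose proof (clamp_bd z5 z6 (g (clamp z2 z3 (g (clamp z1 z2 (g z5))))) ltac:(lra)).
  pose proof (clamp_bd z5 z6 (g (clamp z2 z3 (g (clamp z1 z2 (g z6))))) ltac:(lra)).
  unfold Phi. nra. }
assert (Hfix : Phi p = p) by lra. clear Hp0. unfold Phi in Hfix.
assert (Key : z1 <= g p <= z2 /\ z2 <= g (g p) <= z3 /\ g (g (g p)) = p).
{ repeat (rewrite ?G1, ?G2, ?G3, ?G4, ?G5, ?G6 in *;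
    match goal with H : context [clamp ?lo ?hi ?x] |- _ =>
      let E := fresh "E" in
      destruct (clamp_cases lo hi x ltac:(lra)) as [[? E]|[[? E]|[? E]]]; rewrite E in *; clear E;
      try lra; try subst p end).
  all: rewrite ?G1, ?G2, ?G3, ?G4, ?G5, ?G6 in *; try lra.
  all: idtac. }
destruct Key as (K1 & K2 & K3).
assert (K4 : g p < g (g p)).
{ destruct (Req_dec (g p) z2) as [E|E]; [|lra].
  rewrite E in K2. rewrite G2 in K2. lra. }
exists (fun i => match i with 1 => g p | 2 => g (g p) | _ => p end)%nat.
simpl. split; [|split].
- intros i Hi. destruct i as [|[|[|[|i]]]]; try lia; lra.
- intros i Hi. destruct i as [|[|[|[|i]]]]; try lia; lra.
- intros i Hi. destruct i as [|[|[|[|i]]]]; try lia; auto.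
Qed.


Definition nxtk (k j : nat) : nat := if Nat.eqb j k then 0%nat else S j.
Notation sp6 := (pmap pi6).

Definition BSH (k:nat) (lo hi : nat -> R) : Prop :=
 (1 <= k)%nat /\
 (forall j j', (j <= k)%nat -> (j' <= k)%nat -> j <> j' -> hi j < lo j' \/ hi j' < lo j) /\
 (forall j, (j <= k)%nat -> exists i, (1 <= i <= 6)%nat /\ lo j <= INR i <= hi j) /\
 (forall j i, (j <= k)%nat -> (1 <= i <= 6)%nat -> lo j <= INR i <= hi j ->
    lo (nxtk k j) <= INR (sp6 i) <= hi (nxtk k j)).

Lemma L_same k lo hi j j' i : BSH k lo hi -> (j <= k)%nat -> (j' <= k)%nat ->
  lo j <= INR i <= hi j -> lo j' <= INR i <= hi j' -> j = j'.
Proof.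
intros (_ & Hdis & _) Hj Hj' H1 H2. destruct (Nat.eq_dec j j') as [E|E]; auto.
destruct (Hdis j j' Hj Hj' E); lra.
Qed.

Lemma L_nxt k j : (1 <= k)%nat -> (j <= k)%nat -> (nxtk k j <= k)%nat /\ nxtk k j <> j.
Proof. intros. unfold nxtk. destruct (Nat.eqb_spec j k); lia. Qed.

Lemma L_srange i : (1 <= i <= 6)%nat -> (1 <= sp6 i <= 6)%nat.
Proof. intros. destruct i as [|[|[|[|[|[|[|i]]]]]]]; simpl; lia. Qed.

Lemma L_fw k lo hi j i : BSH k lo hi -> (j <= k)%nat -> (1 <= i <= 6)%nat ->
  lo j <= INR i <= hi j -> lo (nxtk k j) <= INR (sp6 i) <= hi (nxtk k j).
Proof. intros (_ & _ & _ & H) ? ? ?. apply H; auto. Qed.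

Lemma L_no_self k lo hi j i : BSH k lo hi -> (j <= k)%nat -> (1 <= i <= 6)%nat ->
  lo j <= INR i <= hi j -> lo j <= INR (sp6 i) <= hi j -> False.
Proof.
intros H Hj Hi H1 H2. pose proof (L_fw k lo hi j i H Hj Hi H1).
pose proof H as [Hk _]. destruct (L_nxt k j Hk Hj) as [Hn1 Hn2].
apply Hn2. apply (L_same k lo hi (nxtk k j) j (sp6 i)); auto.
Qed.

Lemma L_conv (lo hi : R) i i' m : lo <= INR i <= hi -> lo <= INR i' <= hi ->
  (i <= m <= i')%nat -> lo <= INR m <= hi.
Proof. intros H1 H2 Hm. pose proof (le_INR i m ltac:(lia)). pose proof (le_INR m i' ltac:(lia)). lra. Qed.

Lemma L_no_adj k lo hi j m : BSH k lo hi -> (j <= k)%nat -> (1 <= m <= 5)%nat ->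
  lo j <= INR m <= hi j -> lo j <= INR (S m) <= hi j -> False.
Proof.
intros H Hj Hm H1 H2. pose proof H as [Hk _].
destruct (L_nxt k j Hk Hj) as [Hn _].
destruct (L_nxt k (nxtk k j) Hk Hn) as [Hnn _].
destruct m as [|[|[|[|[|[|m]]]]]]; try lia.
- exact (L_no_self k lo hi j 1 H Hj ltac:(lia) H1 H2).
- pose proof (L_fw k lo hi j 2 H Hj ltac:(lia) H1) as A. pose proof (L_fw k lo hi j 3 H Hj ltac:(lia) H2) as B.
  simpl in A, B. exact (L_no_self k lo hi (nxtk k j) 4 H Hn ltac:(lia) A (L_conv _ _ 4 6 5 A B ltac:(lia))).
- pose proof (L_fw k lo hi j 3 H Hj ltac:(lia) H1) as A. pose proof (L_fw k lo hi j 4 H Hj ltac:(lia) H2) as B.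
  simpl in A, B.
  pose proof (L_fw k lo hi _ 6 H Hn ltac:(lia) A) as A'. pose proof (L_fw k lo hi _ 5 H Hn ltac:(lia) B) as B'.
  simpl in A', B'.
  exact (L_no_self k lo hi (nxtk k (nxtk k j)) 1 H Hnn ltac:(lia) A' (L_conv _ _ 1 3 2 A' B' ltac:(lia))).
- exact (L_no_self k lo hi j 4 H Hj ltac:(lia) H1 H2).
- pose proof (L_fw k lo hi j 5 H Hj ltac:(lia) H1) as A. pose proof (L_fw k lo hi j 6 H Hj ltac:(lia) H2) as B.
  simpl in A, B. exact (L_no_self k lo hi (nxtk k j) 1 H Hn ltac:(lia) B (L_conv _ _ 1 3 2 B A ltac:(lia))).
Qed.

Lemma L_uniq k lo hi j i i' : BSH k lo hi -> (j <= k)%nat -> (1 <= i <= 6)%nat -> (1 <= i' <= 6)%nat -> i <> i' ->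
  lo j <= INR i <= hi j -> lo j <= INR i' <= hi j -> False.
Proof.
intros H Hj Hi Hi' Hne H1 H2.
destruct (Nat.lt_ge_cases i i').
- apply (L_no_adj k lo hi j i H Hj ltac:(lia) H1). exact (L_conv _ _ i i' (S i) H1 H2 ltac:(lia)).
- apply (L_no_adj k lo hi j i' H Hj ltac:(lia) H2). exact (L_conv _ _ i' i (S i') H2 H1 ltac:(lia)).
Qed.

Lemma L_itr_nxt k m : (m <= k)%nat -> itr m (nxtk k) 0%nat = m.
Proof. induction m; intros; simpl; auto. rewrite IHm by lia. unfold nxtk. destruct (Nat.eqb_spec m k); lia. Qed.

Lemma L_itr_nxt' k : itr (S k) (nxtk k) 0%nat = 0%nat.
Proof. simpl. rewrite L_itr_nxt by lia. unfold nxtk. rewrite Nat.eqb_refl. reflexivity. Qed.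

Lemma L_orbit k lo hi p0 : BSH k lo hi -> (1 <= p0 <= 6)%nat -> lo 0%nat <= INR p0 <= hi 0%nat ->
  forall m, (itr m (nxtk k) 0 <= k)%nat /\ (1 <= itr m sp6 p0 <= 6)%nat /\
   lo (itr m (nxtk k) 0%nat) <= INR (itr m sp6 p0) <= hi (itr m (nxtk k) 0%nat).
Proof.
intros H Hp H0 m. induction m as [|m (IH1 & IH2 & IH3)].
- simpl. repeat split; try lia; lra.
- pose proof H as [Hk _]. simpl. split; [apply L_nxt; auto|]. split; [apply L_srange; auto|].
  apply L_fw; auto.
Qed.

Lemma L_k5 k lo hi : BSH k lo hi -> k = 5%nat.
Proof.
intros H. pose proof H as (Hk & _ & Hne & _).
destruct (Hne 0%nat ltac:(lia)) as (p0 & Hp & H0).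
destruct (Nat.lt_ge_cases k 5) as [Hlt|Hge].
- destruct (L_orbit k lo hi p0 H Hp H0 (S k)) as (_ & Hr & Hin).
  rewrite L_itr_nxt' in Hin. exfalso.
  apply (L_uniq k lo hi 0 p0 (itr (S k) sp6 p0) H ltac:(lia) Hp Hr); auto.
  destruct k as [|[|[|[|[|k]]]]]; try lia;
  destruct p0 as [|[|[|[|[|[|[|p0]]]]]]]; try lia; simpl; lia.
- destruct (Nat.eq_dec k 5); auto. exfalso.
  destruct (L_orbit k lo hi p0 H Hp H0 6) as (_ & Hr & Hin).
  rewrite L_itr_nxt in Hin by lia.
  assert (itr 6 sp6 p0 = p0) as E.
  { destruct p0 as [|[|[|[|[|[|[|p0]]]]]]]; try lia; reflexivity. }
  rewrite E in Hin.
  pose proof (L_same k lo hi 6 0 p0 H ltac:(lia) ltac:(lia) Hin H0). lia.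
Qed.

Lemma L_order k lo hi j j' i i' : BSH k lo hi -> (j <= k)%nat -> (j' <= k)%nat ->
  (1 <= i)%nat -> (i < i')%nat -> (i' <= 6)%nat ->
  lo j <= INR i <= hi j -> lo j' <= INR i' <= hi j' -> hi j < lo j'.
Proof.
intros H Hj Hj' Hi Hii Hi' H1 H2.
destruct (Nat.eq_dec j j') as [E|E].
- subst j'. exfalso. apply (L_uniq k lo hi j i i' H Hj ltac:(lia) ltac:(lia) ltac:(lia) H1 H2).
- pose proof H as (_ & Hdis & _). pose proof (lt_INR i i' Hii).
  destruct (Hdis j j' Hj Hj' E); lra.
Qed.

Lemma bs_vals P' : block_structure pi6 P' ->
  psize P' = 6%nat /\
  (pmap P' 1 = 2 /\ pmap P' 2 = 4 /\ pmap P' 3 = 6 /\ pmap P' 4 = 5 /\ pmap P' 5 = 3 /\ pmap P' 6 = 1)%nat.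
Proof.
unfold block_structure. intros (k & Hk & Hsz & lo & hi & beta & BS). cbv zeta in BS.
destruct BS as (Hlh & Hdis & Hne & Hfw & Hbw & Hbr & Hbo & Hbm).
assert (H : BSH k lo hi) by (split; [exact Hk|]; split; [exact Hdis|]; split; [exact Hne|exact Hfw]).
pose proof (L_k5 _ _ _ H) as Hk5. subst k.
split; [exact Hsz|].
destruct (Hne 0%nat ltac:(lia)) as (p0 & Hp & H0).
assert (Hob := L_orbit 5 lo hi p0 H Hp H0).
assert (Hin : forall m, (m <= 5)%nat -> lo m <= INR (itr m sp6 p0) <= hi m).
{ intros m Hm. destruct (Hob m) as (_ & _ & X). rewrite L_itr_nxt in X by lia. exact X. }
pose proof (Hbr 0%nat ltac:(lia)). pose proof (Hbr 1%nat ltac:(lia)). pose proof (Hbr 2%nat ltac:(lia)).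
pose proof (Hbr 3%nat ltac:(lia)). pose proof (Hbr 4%nat ltac:(lia)). pose proof (Hbr 5%nat ltac:(lia)).
change (psize pi6) with 6%nat in Hp.
destruct p0 as [|[|[|[|[|[|[|p0]]]]]]]; try lia.
-
  pose proof (Hin 0%nat ltac:(lia)) as I0; cbn [itr pmap pi6] in I0.
  pose proof (Hin 1%nat ltac:(lia)) as I1; cbn [itr pmap pi6] in I1.
  pose proof (Hin 2%nat ltac:(lia)) as I2; cbn [itr pmap pi6] in I2.
  pose proof (Hin 3%nat ltac:(lia)) as I3; cbn [itr pmap pi6] in I3.
  pose proof (Hin 4%nat ltac:(lia)) as I4; cbn [itr pmap pi6] in I4.
  pose proof (Hin 5%nat ltac:(lia)) as I5; cbn [itr pmap pi6] in I5.
  assert (beta 0%nat < beta 1%nat)%nat by (apply Hbo; [lia|lia|]; exact (L_order 5 lo hi 0 1 1 2 H ltac:(lia) ltac:(lia) ltac:(lia) ltac:(lia) ltac:(lia) I0 I1)).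
  assert (beta 1%nat < beta 4%nat)%nat by (apply Hbo; [lia|lia|]; exact (L_order 5 lo hi 1 4 2 3 H ltac:(lia) ltac:(lia) ltac:(lia) ltac:(lia) ltac:(lia) I1 I4)).
  assert (beta 4%nat < beta 2%nat)%nat by (apply Hbo; [lia|lia|]; exact (L_order 5 lo hi 4 2 3 4 H ltac:(lia) ltac:(lia) ltac:(lia) ltac:(lia) ltac:(lia) I4 I2)).
  assert (beta 2%nat < beta 3%nat)%nat by (apply Hbo; [lia|lia|]; exact (L_order 5 lo hi 2 3 4 5 H ltac:(lia) ltac:(lia) ltac:(lia) ltac:(lia) ltac:(lia) I2 I3)).
  assert (beta 3%nat < beta 5%nat)%nat by (apply Hbo; [lia|lia|]; exact (L_order 5 lo hi 3 5 5 6 H ltac:(lia) ltac:(lia) ltac:(lia) ltac:(lia) ltac:(lia) I3 I5)).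
  assert (Eb0 : beta 0%nat = 1%nat) by lia.
  assert (Eb1 : beta 1%nat = 2%nat) by lia.
  assert (Eb2 : beta 2%nat = 4%nat) by lia.
  assert (Eb3 : beta 3%nat = 5%nat) by lia.
  assert (Eb4 : beta 4%nat = 3%nat) by lia.
  assert (Eb5 : beta 5%nat = 6%nat) by lia.
  pose proof (Hbm 0%nat ltac:(lia)) as X0; simpl in X0; rewrite Eb0, Eb1 in X0.
  pose proof (Hbm 1%nat ltac:(lia)) as X1; simpl in X1; rewrite Eb1, Eb2 in X1.
  pose proof (Hbm 2%nat ltac:(lia)) as X2; simpl in X2; rewrite Eb2, Eb3 in X2.
  pose proof (Hbm 3%nat ltac:(lia)) as X3; simpl in X3; rewrite Eb3, Eb4 in X3.
  pose proof (Hbm 4%nat ltac:(lia)) as X4; simpl in X4; rewrite Eb4, Eb5 in X4.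
  pose proof (Hbm 5%nat ltac:(lia)) as X5; simpl in X5; rewrite Eb5, Eb0 in X5.
  repeat split; assumption.
-
  pose proof (Hin 0%nat ltac:(lia)) as I0; cbn [itr pmap pi6] in I0.
  pose proof (Hin 1%nat ltac:(lia)) as I1; cbn [itr pmap pi6] in I1.
  pose proof (Hin 2%nat ltac:(lia)) as I2; cbn [itr pmap pi6] in I2.
  pose proof (Hin 3%nat ltac:(lia)) as I3; cbn [itr pmap pi6] in I3.
  pose proof (Hin 4%nat ltac:(lia)) as I4; cbn [itr pmap pi6] in I4.
  pose proof (Hin 5%nat ltac:(lia)) as I5; cbn [itr pmap pi6] in I5.
  assert (beta 5%nat < beta 0%nat)%nat by (apply Hbo; [lia|lia|]; exact (L_order 5 lo hi 5 0 1 2 H ltac:(lia) ltac:(lia) ltac:(lia) ltac:(lia) ltac:(lia) I5 I0)).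
  assert (beta 0%nat < beta 3%nat)%nat by (apply Hbo; [lia|lia|]; exact (L_order 5 lo hi 0 3 2 3 H ltac:(lia) ltac:(lia) ltac:(lia) ltac:(lia) ltac:(lia) I0 I3)).
  assert (beta 3%nat < beta 1%nat)%nat by (apply Hbo; [lia|lia|]; exact (L_order 5 lo hi 3 1 3 4 H ltac:(lia) ltac:(lia) ltac:(lia) ltac:(lia) ltac:(lia) I3 I1)).
  assert (beta 1%nat < beta 2%nat)%nat by (apply Hbo; [lia|lia|]; exact (L_order 5 lo hi 1 2 4 5 H ltac:(lia) ltac:(lia) ltac:(lia) ltac:(lia) ltac:(lia) I1 I2)).
  assert (beta 2%nat < beta 4%nat)%nat by (apply Hbo; [lia|lia|]; exact (L_order 5 lo hi 2 4 5 6 H ltac:(lia) ltac:(lia) ltac:(lia) ltac:(lia) ltac:(lia) I2 I4)).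
  assert (Eb0 : beta 0%nat = 2%nat) by lia.
  assert (Eb1 : beta 1%nat = 4%nat) by lia.
  assert (Eb2 : beta 2%nat = 5%nat) by lia.
  assert (Eb3 : beta 3%nat = 3%nat) by lia.
  assert (Eb4 : beta 4%nat = 6%nat) by lia.
  assert (Eb5 : beta 5%nat = 1%nat) by lia.
  pose proof (Hbm 0%nat ltac:(lia)) as X0; simpl in X0; rewrite Eb0, Eb1 in X0.
  pose proof (Hbm 1%nat ltac:(lia)) as X1; simpl in X1; rewrite Eb1, Eb2 in X1.
  pose proof (Hbm 2%nat ltac:(lia)) as X2; simpl in X2; rewrite Eb2, Eb3 in X2.
  pose proof (Hbm 3%nat ltac:(lia)) as X3; simpl in X3; rewrite Eb3, Eb4 in X3.
  pose proof (Hbm 4%nat ltac:(lia)) as X4; simpl in X4; rewrite Eb4, Eb5 in X4.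
  pose proof (Hbm 5%nat ltac:(lia)) as X5; simpl in X5; rewrite Eb5, Eb0 in X5.
  repeat split; assumption.
-
  pose proof (Hin 0%nat ltac:(lia)) as I0; cbn [itr pmap pi6] in I0.
  pose proof (Hin 1%nat ltac:(lia)) as I1; cbn [itr pmap pi6] in I1.
  pose proof (Hin 2%nat ltac:(lia)) as I2; cbn [itr pmap pi6] in I2.
  pose proof (Hin 3%nat ltac:(lia)) as I3; cbn [itr pmap pi6] in I3.
  pose proof (Hin 4%nat ltac:(lia)) as I4; cbn [itr pmap pi6] in I4.
  pose proof (Hin 5%nat ltac:(lia)) as I5; cbn [itr pmap pi6] in I5.
  assert (beta 2%nat < beta 3%nat)%nat by (apply Hbo; [lia|lia|]; exact (L_order 5 lo hi 2 3 1 2 H ltac:(lia) ltac:(lia) ltac:(lia) ltac:(lia) ltac:(lia) I2 I3)).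
  assert (beta 3%nat < beta 0%nat)%nat by (apply Hbo; [lia|lia|]; exact (L_order 5 lo hi 3 0 2 3 H ltac:(lia) ltac:(lia) ltac:(lia) ltac:(lia) ltac:(lia) I3 I0)).
  assert (beta 0%nat < beta 4%nat)%nat by (apply Hbo; [lia|lia|]; exact (L_order 5 lo hi 0 4 3 4 H ltac:(lia) ltac:(lia) ltac:(lia) ltac:(lia) ltac:(lia) I0 I4)).
  assert (beta 4%nat < beta 5%nat)%nat by (apply Hbo; [lia|lia|]; exact (L_order 5 lo hi 4 5 4 5 H ltac:(lia) ltac:(lia) ltac:(lia) ltac:(lia) ltac:(lia) I4 I5)).
  assert (beta 5%nat < beta 1%nat)%nat by (apply Hbo; [lia|lia|]; exact (L_order 5 lo hi 5 1 5 6 H ltac:(lia) ltac:(lia) ltac:(lia) ltac:(lia) ltac:(lia) I5 I1)).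
  assert (Eb0 : beta 0%nat = 3%nat) by lia.
  assert (Eb1 : beta 1%nat = 6%nat) by lia.
  assert (Eb2 : beta 2%nat = 1%nat) by lia.
  assert (Eb3 : beta 3%nat = 2%nat) by lia.
  assert (Eb4 : beta 4%nat = 4%nat) by lia.
  assert (Eb5 : beta 5%nat = 5%nat) by lia.
  pose proof (Hbm 0%nat ltac:(lia)) as X0; simpl in X0; rewrite Eb0, Eb1 in X0.
  pose proof (Hbm 1%nat ltac:(lia)) as X1; simpl in X1; rewrite Eb1, Eb2 in X1.
  pose proof (Hbm 2%nat ltac:(lia)) as X2; simpl in X2; rewrite Eb2, Eb3 in X2.
  pose proof (Hbm 3%nat ltac:(lia)) as X3; simpl in X3; rewrite Eb3, Eb4 in X3.
  pose proof (Hbm 4%nat ltac:(lia)) as X4; simpl in X4; rewrite Eb4, Eb5 in X4.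
  pose proof (Hbm 5%nat ltac:(lia)) as X5; simpl in X5; rewrite Eb5, Eb0 in X5.
  repeat split; assumption.
-
  pose proof (Hin 0%nat ltac:(lia)) as I0; cbn [itr pmap pi6] in I0.
  pose proof (Hin 1%nat ltac:(lia)) as I1; cbn [itr pmap pi6] in I1.
  pose proof (Hin 2%nat ltac:(lia)) as I2; cbn [itr pmap pi6] in I2.
  pose proof (Hin 3%nat ltac:(lia)) as I3; cbn [itr pmap pi6] in I3.
  pose proof (Hin 4%nat ltac:(lia)) as I4; cbn [itr pmap pi6] in I4.
  pose proof (Hin 5%nat ltac:(lia)) as I5; cbn [itr pmap pi6] in I5.
  assert (beta 4%nat < beta 5%nat)%nat by (apply Hbo; [lia|lia|]; exact (L_order 5 lo hi 4 5 1 2 H ltac:(lia) ltac:(lia) ltac:(lia) ltac:(lia) ltac:(lia) I4 I5)).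
  assert (beta 5%nat < beta 2%nat)%nat by (apply Hbo; [lia|lia|]; exact (L_order 5 lo hi 5 2 2 3 H ltac:(lia) ltac:(lia) ltac:(lia) ltac:(lia) ltac:(lia) I5 I2)).
  assert (beta 2%nat < beta 0%nat)%nat by (apply Hbo; [lia|lia|]; exact (L_order 5 lo hi 2 0 3 4 H ltac:(lia) ltac:(lia) ltac:(lia) ltac:(lia) ltac:(lia) I2 I0)).
  assert (beta 0%nat < beta 1%nat)%nat by (apply Hbo; [lia|lia|]; exact (L_order 5 lo hi 0 1 4 5 H ltac:(lia) ltac:(lia) ltac:(lia) ltac:(lia) ltac:(lia) I0 I1)).
  assert (beta 1%nat < beta 3%nat)%nat by (apply Hbo; [lia|lia|]; exact (L_order 5 lo hi 1 3 5 6 H ltac:(lia) ltac:(lia) ltac:(lia) ltac:(lia) ltac:(lia) I1 I3)).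
  assert (Eb0 : beta 0%nat = 4%nat) by lia.
  assert (Eb1 : beta 1%nat = 5%nat) by lia.
  assert (Eb2 : beta 2%nat = 3%nat) by lia.
  assert (Eb3 : beta 3%nat = 6%nat) by lia.
  assert (Eb4 : beta 4%nat = 1%nat) by lia.
  assert (Eb5 : beta 5%nat = 2%nat) by lia.
  pose proof (Hbm 0%nat ltac:(lia)) as X0; simpl in X0; rewrite Eb0, Eb1 in X0.
  pose proof (Hbm 1%nat ltac:(lia)) as X1; simpl in X1; rewrite Eb1, Eb2 in X1.
  pose proof (Hbm 2%nat ltac:(lia)) as X2; simpl in X2; rewrite Eb2, Eb3 in X2.
  pose proof (Hbm 3%nat ltac:(lia)) as X3; simpl in X3; rewrite Eb3, Eb4 in X3.
  pose proof (Hbm 4%nat ltac:(lia)) as X4; simpl in X4; rewrite Eb4, Eb5 in X4.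
  pose proof (Hbm 5%nat ltac:(lia)) as X5; simpl in X5; rewrite Eb5, Eb0 in X5.
  repeat split; assumption.
-
  pose proof (Hin 0%nat ltac:(lia)) as I0; cbn [itr pmap pi6] in I0.
  pose proof (Hin 1%nat ltac:(lia)) as I1; cbn [itr pmap pi6] in I1.
  pose proof (Hin 2%nat ltac:(lia)) as I2; cbn [itr pmap pi6] in I2.
  pose proof (Hin 3%nat ltac:(lia)) as I3; cbn [itr pmap pi6] in I3.
  pose proof (Hin 4%nat ltac:(lia)) as I4; cbn [itr pmap pi6] in I4.
  pose proof (Hin 5%nat ltac:(lia)) as I5; cbn [itr pmap pi6] in I5.
  assert (beta 3%nat < beta 4%nat)%nat by (apply Hbo; [lia|lia|]; exact (L_order 5 lo hi 3 4 1 2 H ltac:(lia) ltac:(lia) ltac:(lia) ltac:(lia) ltac:(lia) I3 I4)).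
  assert (beta 4%nat < beta 1%nat)%nat by (apply Hbo; [lia|lia|]; exact (L_order 5 lo hi 4 1 2 3 H ltac:(lia) ltac:(lia) ltac:(lia) ltac:(lia) ltac:(lia) I4 I1)).
  assert (beta 1%nat < beta 5%nat)%nat by (apply Hbo; [lia|lia|]; exact (L_order 5 lo hi 1 5 3 4 H ltac:(lia) ltac:(lia) ltac:(lia) ltac:(lia) ltac:(lia) I1 I5)).
  assert (beta 5%nat < beta 0%nat)%nat by (apply Hbo; [lia|lia|]; exact (L_order 5 lo hi 5 0 4 5 H ltac:(lia) ltac:(lia) ltac:(lia) ltac:(lia) ltac:(lia) I5 I0)).
  assert (beta 0%nat < beta 2%nat)%nat by (apply Hbo; [lia|lia|]; exact (L_order 5 lo hi 0 2 5 6 H ltac:(lia) ltac:(lia) ltac:(lia) ltac:(lia) ltac:(lia) I0 I2)).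
  assert (Eb0 : beta 0%nat = 5%nat) by lia.
  assert (Eb1 : beta 1%nat = 3%nat) by lia.
  assert (Eb2 : beta 2%nat = 6%nat) by lia.
  assert (Eb3 : beta 3%nat = 1%nat) by lia.
  assert (Eb4 : beta 4%nat = 2%nat) by lia.
  assert (Eb5 : beta 5%nat = 4%nat) by lia.
  pose proof (Hbm 0%nat ltac:(lia)) as X0; simpl in X0; rewrite Eb0, Eb1 in X0.
  pose proof (Hbm 1%nat ltac:(lia)) as X1; simpl in X1; rewrite Eb1, Eb2 in X1.
  pose proof (Hbm 2%nat ltac:(lia)) as X2; simpl in X2; rewrite Eb2, Eb3 in X2.
  pose proof (Hbm 3%nat ltac:(lia)) as X3; simpl in X3; rewrite Eb3, Eb4 in X3.
  pose proof (Hbm 4%nat ltac:(lia)) as X4; simpl in X4; rewrite Eb4, Eb5 in X4.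
  pose proof (Hbm 5%nat ltac:(lia)) as X5; simpl in X5; rewrite Eb5, Eb0 in X5.
  repeat split; assumption.
-
  pose proof (Hin 0%nat ltac:(lia)) as I0; cbn [itr pmap pi6] in I0.
  pose proof (Hin 1%nat ltac:(lia)) as I1; cbn [itr pmap pi6] in I1.
  pose proof (Hin 2%nat ltac:(lia)) as I2; cbn [itr pmap pi6] in I2.
  pose proof (Hin 3%nat ltac:(lia)) as I3; cbn [itr pmap pi6] in I3.
  pose proof (Hin 4%nat ltac:(lia)) as I4; cbn [itr pmap pi6] in I4.
  pose proof (Hin 5%nat ltac:(lia)) as I5; cbn [itr pmap pi6] in I5.
  assert (beta 1%nat < beta 2%nat)%nat by (apply Hbo; [lia|lia|]; exact (L_order 5 lo hi 1 2 1 2 H ltac:(lia) ltac:(lia) ltac:(lia) ltac:(lia) ltac:(lia) I1 I2)).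
  assert (beta 2%nat < beta 5%nat)%nat by (apply Hbo; [lia|lia|]; exact (L_order 5 lo hi 2 5 2 3 H ltac:(lia) ltac:(lia) ltac:(lia) ltac:(lia) ltac:(lia) I2 I5)).
  assert (beta 5%nat < beta 3%nat)%nat by (apply Hbo; [lia|lia|]; exact (L_order 5 lo hi 5 3 3 4 H ltac:(lia) ltac:(lia) ltac:(lia) ltac:(lia) ltac:(lia) I5 I3)).
  assert (beta 3%nat < beta 4%nat)%nat by (apply Hbo; [lia|lia|]; exact (L_order 5 lo hi 3 4 4 5 H ltac:(lia) ltac:(lia) ltac:(lia) ltac:(lia) ltac:(lia) I3 I4)).
  assert (beta 4%nat < beta 0%nat)%nat by (apply Hbo; [lia|lia|]; exact (L_order 5 lo hi 4 0 5 6 H ltac:(lia) ltac:(lia) ltac:(lia) ltac:(lia) ltac:(lia) I4 I0)).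
  assert (Eb0 : beta 0%nat = 6%nat) by lia.
  assert (Eb1 : beta 1%nat = 1%nat) by lia.
  assert (Eb2 : beta 2%nat = 2%nat) by lia.
  assert (Eb3 : beta 3%nat = 4%nat) by lia.
  assert (Eb4 : beta 4%nat = 5%nat) by lia.
  assert (Eb5 : beta 5%nat = 3%nat) by lia.
  pose proof (Hbm 0%nat ltac:(lia)) as X0; simpl in X0; rewrite Eb0, Eb1 in X0.
  pose proof (Hbm 1%nat ltac:(lia)) as X1; simpl in X1; rewrite Eb1, Eb2 in X1.
  pose proof (Hbm 2%nat ltac:(lia)) as X2; simpl in X2; rewrite Eb2, Eb3 in X2.
  pose proof (Hbm 3%nat ltac:(lia)) as X3; simpl in X3; rewrite Eb3, Eb4 in X3.
  pose proof (Hbm 4%nat ltac:(lia)) as X4; simpl in X4; rewrite Eb4, Eb5 in X4.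
  pose proof (Hbm 5%nat ltac:(lia)) as X5; simpl in X5; rewrite Eb5, Eb0 in X5.
  repeat split; assumption.
Qed.


Theorem mainTheorem8 :
  is_cyclic_perm pi6 /\
  unimodal pi6 /\
  over_rotation_pair pi6 = (2%nat, 6%nat) /\
  code_nondecreasing pi6 /\
  is_r_pi pi6 (rho pi6) /\ rho pi6 = 1 / 3 /\
  ~ (exists P', over_twist P' (1 / 3) /\ block_structure pi6 P') /\
  very_badly_ordered pi6.
Proof.
assert (NB : ~ (exists P', over_twist P' (1/3) /\ block_structure pi6 P')).
{ intros (P' & [Hc [Hr Hm]] & Hb). destruct (bs_vals P' Hb) as [Hs Hv].
  pose proof (Hm C3 C3_cyc C3_rho (force_C3 P' Hs Hv)) as [E _]. rewrite Hs in E. simpl in E. discriminate. }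
split; [exact cyc6|]. split; [exact unimodal_pi6|]. split; [exact pair6|]. split; [exact code_nd|].
split; [rewrite rho6; exact rpi6|]. split; [exact rho6|]. split; [exact NB|].
unfold very_badly_ordered. rewrite rho6. split; [exact rpi6|exact NB].
Qed.
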